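(* In the setting described in the context, suppose there is a compact interval $\Delta\subset\mathbb{R}$ such that for every $n\in\mathbb{N}_0$: (a) the polynomial $p_n$ has exactly $n$ simple zeros, all lying inside $\Delta$; (b) the zeros of $p_n$ and $p_{n+1}$ interlace. Then the matrix $J$ satisfies $\sup_{|i-j|\le R}|J_{i,j}|<\infty$ for every $R\ge0$.
   Context: Let $r\ge1$ and let $\mu_1,\dots,\mu_r$ be positive Borel measures on $\mathbb{R}$ with all moments finite, forming a perfect system: for every $\vec n\in\mathbb{N}_0^r$ there is a monic polynomial $P_{\vec n}$ of degree $|\vec n|=n_1+\dots+n_r$ with $\int x^kP_{\vec n}\,d\mu_j=0$ for $0\le k\le n_j-1$, $1\le j\le r$. Fix a path $(\vec n_\ell)_{\ell\ge0}$ with $|\vec n_\ell|=\ell$ and $\vec n_{\ell+1}=\vec n_\ell+\vec e_{i_\ell}$ ($\vec e_j$ the $j$-th unit vector, $i_\ell\in\{1,\dots,r\}$), and set $p_\ell=P_{\vec n_\ell}$. The matrix $J=[J_{\ell,k}]_{\ell,k\ge0}$ is defined by $xp_\ell=\sum_{k=0}^{\ell+1}J_{\ell,k}p_k$, with $J_{\ell,k}=0$ for $k>\ell+1$. *)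

(* Defs.v *)
From HB Require Import structures.
From mathcomp Require Import all_boot all_order all_algebra.
From mathcomp Require Import all_classical all_reals all_analysis.
Set Implicit Arguments. Unset Strict Implicit. Unset Printing Implicit Defensive.
Import Order.TTheory GRing.Theory Num.Theory.
Local Open Scope ring_scope.

(* Measures on R (Borel sigma-algebra = sigma-algebra generated by ]a,b]),
   multi-indices are functions 'I_r -> nat. *)

Definition mi_size (r : nat) (n : 'I_r -> nat) : nat := (\sum_(j < r) n j)%N.

Definition finite_moments (R : realType) (mu : {measure set R -> \bar R}) :=
  forall k : nat, mu.-integrable setT (fun x : R => (x ^+ k)%:E).

Definition typeII_MOP (R : realType) (r : nat)
    (mu : 'I_r -> {measure set R -> \bar R}) (n : 'I_r -> nat) (P : {poly R}) :=
  [/\ P \is monic, size P = (mi_size n).+1 &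
      forall (j : 'I_r) (k : nat), (k < n j)%N ->
        (\int[mu j]_x ((x ^+ k * P.[x])%:E) = 0)%E].

Definition perfect_system (R : realType) (r : nat)
    (mu : 'I_r -> {measure set R -> \bar R}) :=
  forall n : 'I_r -> nat, exists! P : {poly R}, typeII_MOP mu n P.

Definition zeros_list (R : realType) (p : {poly R}) (s : seq R) :=
  p != 0 /\ sorted <%R s /\ forall x, root p x <-> x \in s.

Definition interlace (R : realType) (s t : seq R) :=
  size t = (size s).+1 /\
  forall i : nat, (i < size s)%N -> t`_i < s`_i /\ s`_i < t`_i.+1.

(* Main.v *)
Require Import Defs.
From HB Require Import structures.
From mathcomp Require Import all_boot all_order all_algebra.
From mathcomp Require Import all_classical all_reals all_analysis.
Import Order.TTheory GRing.Theory Num.Theory.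
From mathcomp Require Import ring lra zify.
Local Open Scope ring_scope.

Lemma size_sub_monic (R : nzRingType) (p q : {poly R}) n :
  p \is monic -> q \is monic -> size p = n.+1 -> size q = n.+1 ->
  (size (p - q)%R <= n)%N.
Proof.
move=> /monicP mp /monicP mq sp sq; apply/leq_sizeP => i hi.
rewrite coefB; case: (ltngtP n i) hi => // [lt _|<- _].
  by rewrite !nth_default ?subr0 // ?sp ?sq.
by move: mp mq; rewrite /lead_coef sp sq /= => -> ->; rewrite subrr.
Qed.

Lemma monic_prod_eq (R : fieldType) (p : {poly R}) (s : seq R) :
  p \is monic -> size p = (size s).+1 -> uniq s -> (forall x, x \in s -> root p x) ->
  p = \prod_(x <- s) ('X - x%:P).
Proof.
move=> mp sp us rs; set q := \prod_(x <- s) _.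
have mq : q \is monic := monic_prod_XsubC s xpredT id.
have sq : size q = (size s).+1 by rewrite size_prod_XsubC.
apply/eqP; rewrite -subr_eq0; apply/negPn/negP => nz.
have : all (root (p - q)) s.
  apply/allP => x xs; rewrite rootE hornerD hornerN.
  move: (rs x xs); rewrite rootE => /eqP ->.
  by have := root_prod_XsubC s x; rewrite xs rootE => /eqP ->; rewrite subrr.
move=> /(max_poly_roots nz) /(_ us).
by rewrite ltnNge (@size_sub_monic _ p q (size s) mp mq sp sq).
Qed.

Lemma size_sum_le (R : nzRingType) (I : finType) (F : I -> {poly R}) d :
  (forall i, (size (F i) <= d)%N) -> (size (\sum_i F i)%R <= d)%N.
Proof.
move=> h; elim/big_ind: _ => //; first by rewrite size_poly0.
by move=> x y hx hy; apply: leq_trans (size_polyD _ _) _; rewrite geq_max hx hy.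
Qed.

Lemma sorted_lt (R : realFieldType) (t : seq R) a b :
  sorted <%R t -> (a < b)%N -> (b < size t)%N -> t`_a < t`_b.
Proof.
move=> st ab bs; apply: (sorted_ltn_nth lt_trans 0 st) => //.
by rewrite inE (ltn_trans ab bs).
Qed.

Lemma sorted_le (R : realFieldType) (t : seq R) a b :
  sorted <%R t -> (a <= b)%N -> (b < size t)%N -> t`_a <= t`_b.
Proof.
move=> st; rewrite leq_eqVlt => /orP [/eqP -> //|ab] bs.
exact/ltW/sorted_lt.
Qed.

Lemma lemmaA (R : realFieldType) (pj pj1 : {poly R}) (s t : seq R) (j : nat) (B : R) :
  pj \is monic -> size pj = j.+1 -> pj1 \is monic -> size pj1 = j.+2 ->
  size s = j -> size t = j.+1 -> sorted <%R s -> sorted <%R t ->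
  (forall x, x \in s -> root pj x) -> (forall x, x \in t -> root pj1 x) ->
  (forall i, (i < j)%N -> t`_i < s`_i /\ s`_i < t`_i.+1) ->
  (forall x, x \in t -> `|x| <= B) -> 1 <= B ->
  forall N, exists D : {poly R}, [/\ (size D <= N)%N,
     (forall e, `|D`_e| <= N%:R * B ^+ N) &
     (size ('X^N * pj - pj1 * D)%R <= j.+1)%N].
Proof.
move=> mpj spj mpj1 spj1 hs ht ss st rsj rsj1 hint hB B1 N.
have us := lt_sorted_uniq ss; have ut := lt_sorted_uniq st.
have Ep : pj = \prod_(x <- s) ('X - x%:P).
  by apply: monic_prod_eq => //; rewrite hs.
have Ep1 : pj1 = \prod_(x <- t) ('X - x%:P).
  by apply: monic_prod_eq => //; rewrite ht.
pose F (i : nat) := 'X - (t`_i)%:P.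
pose q (i : 'I_j.+1) := \prod_(k < j) F (lift i k).
have Ep1' : pj1 = \prod_(i < j.+1) F i.
  by rewrite Ep1 (big_nth 0) ht big_mkord.
have hq (i : 'I_j.+1) : pj1 = F i * q i by rewrite Ep1' (bigD1_ord i).
have mq i : q i \is monic by apply: monic_prod_XsubC.
have sq i : size (q i) = j.+1.
  have := spj1; rewrite (hq i) size_Mmonic ?size_XsubC //.
    by rewrite add2n => -[].
  by rewrite -size_poly_eq0 size_XsubC.
pose w (i : 'I_j.+1) := pj.[t`_i] / (q i).[t`_i].
have pos (i : 'I_j.+1) : 0 < pj.[t`_i] * (q i).[t`_i].
  rewrite Ep horner_prod (big_nth 0) hs big_mkord /q horner_prod -big_split /=.
  apply: prodr_gt0 => k _; rewrite /F !hornerXsubC.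
  have hk := ltn_ord k; have hi := ltn_ord i.
  have [h1 h2] := hint k hk.
  case: (ltnP k i) => ki.
    have -> : bump i k = k by rewrite /bump leqNgt ki.
    have h3 : t`_k < t`_i by apply: sorted_lt; rewrite ?ht.
    have h4 : t`_k.+1 <= t`_i by apply: sorted_le; rewrite ?ht.
    apply: mulr_gt0; rewrite subr_gt0 //; exact: lt_le_trans h2 h4.
  have -> : bump i k = k.+1 by rewrite /bump ki add1n.
  have h3 : t`_i < t`_k.+1 by apply: sorted_lt; rewrite ?ht // ltnS.
  have h4 : t`_i <= t`_k by apply: sorted_le; rewrite ?ht // ltnS ltnW.
  have h5 : t`_i < s`_k by apply: le_lt_trans h4 h1.
  nra.
have qn (i : 'I_j.+1) : (q i).[t`_i] != 0.
  by apply/negP => /eqP h; have := pos i; rewrite h mulr0 ltxx.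
have w0 (i : 'I_j.+1) : 0 <= w i.
  have -> : w i = (pj.[t`_i] * (q i).[t`_i]) / ((q i).[t`_i] ^+ 2).
    by rewrite /w; field; apply: qn.
  by apply: divr_ge0; [exact: ltW | exact: sqr_ge0].
have qz (i : 'I_j.+1) (k : 'I_j.+1) : i != k -> (q i).[t`_k] = 0.
  move=> ik; have : pj1.[t`_k] = 0 by apply/eqP; apply: rsj1; rewrite mem_nth ?ht.
  rewrite (hq i) hornerM /F hornerXsubC => /eqP; rewrite mulf_eq0 => /orP [|/eqP //].
  rewrite subr_eq0 nth_uniq ?ht // => /eqP h.
  by rewrite (val_inj h) eqxx in ik.
have L : pj = \sum_(i < j.+1) w i *: q i.
  apply/eqP; rewrite -subr_eq0; apply/negPn/negP => nz.
  have : all (root (pj - \sum_(i < j.+1) w i *: q i)) t.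
    apply/(all_nthP 0) => k; rewrite ht => hk.
    rewrite rootE hornerD hornerN horner_sum (bigD1 (Ordinal hk)) //= big1.
      by rewrite addr0 hornerZ /w divfK ?subrr // qn.
    move=> i ik; rewrite hornerZ (qz i (Ordinal hk)) ?mulr0 //.
  move=> /(max_poly_roots nz) /(_ ut); rewrite ht ltnNge.
  apply/negP/negPn; apply: leq_trans (size_polyD _ _) _.
  rewrite size_polyN geq_max spj leqnn /=; apply: size_sum_le => i.
  by apply: leq_trans (size_scale_leq _ _) _; rewrite sq.
have S1 : \sum_(i < j.+1) w i = 1.
  have := congr1 (fun p : {poly R} => p`_j) L; rewrite /= coef_sum.
  move: mpj => /monicP; rewrite /lead_coef spj /= => ->.
  move=> ->; apply: eq_bigr => i _; rewrite coefZ.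
  by move: (mq i) => /monicP; rewrite /lead_coef sq /= => ->; rewrite mulr1.
have tB (i : 'I_j.+1) : `|t`_i| <= B by apply: hB; rewrite mem_nth ?ht.
pose S (i : 'I_j.+1) := \sum_(v < N) 'X^(N.-1 - v) * (t`_i ^+ v)%:P.
have sS (i : 'I_j.+1) : (size (S i) <= N)%N.
  apply: size_sum_le => v; apply: leq_trans (size_polyMleq _ _) _.
  have hv := ltn_ord v; have hc := size_polyC_leq1 (t`_i ^+ v).
  rewrite size_polyXn addSn /= -subn1; apply: leq_trans (leq_add (leqnn _) hc) _; lia.
have cS (i : 'I_j.+1) e : `|(S i)`_e| <= N%:R * B ^+ N.
  rewrite coef_sum; apply: le_trans (ler_norm_sum _ _ _) _.
  apply: (@le_trans _ _ (\sum_(v < N) B ^+ N)).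
    apply: ler_sum => v _; rewrite coefMC coefXn normrM normrX.
    have hv : B ^+ v <= B ^+ N by apply: ler_weXn2l => //; exact: ltnW.
    have hv2 : `|t`_i| ^+ v <= B ^+ v by apply: lerXn2r; rewrite ?nnegrE ?normr_ge0 //; exact: le_trans (normr_ge0 _) (tB i).
    case: (_ == _); rewrite ?normr1 ?normr0 ?mul1r ?mul0r; last by apply: exprn_ge0; exact: le_trans ler01 B1.
    exact: le_trans hv2 hv.
  by rewrite sumr_const card_ord mulr_natl.
exists (\sum_(i < j.+1) w i *: S i); split.
- by apply: size_sum_le => i; apply: leq_trans (size_scale_leq _ _) _.
- move=> e; rewrite coef_sum; apply: le_trans (ler_norm_sum _ _ _) _.
  apply: (@le_trans _ _ (\sum_(i < j.+1) w i * (N%:R * B ^+ N))).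
    apply: ler_sum => i _; rewrite coefZ normrM ger0_norm //.
    exact: ler_wpM2l.
  by rewrite -mulr_suml S1 mul1r.
- have -> : 'X^N * pj - pj1 * \sum_(i < j.+1) w i *: S i =
            \sum_(i < j.+1) (w i * t`_i ^+ N) *: q i.
    rewrite {1}L mulr_sumr mulr_sumr -sumrB; apply: eq_bigr => i _.
    rewrite -!scalerAr -scalerBr -scalerA; congr (_ *: _).
    have E : F i * S i = 'X^N - (t`_i)%:P ^+ N.
      rewrite /F /S subrXX; congr (_ * _); apply: eq_bigr => v _.
      by rewrite polyC_exp.
    rewrite (hq i) [F i * q i]mulrC -mulrA E -mul_polyC polyC_exp; ring.
  by apply: size_sum_le => i; apply: leq_trans (size_scale_leq _ _) _; rewrite sq.
Qed.


Lemma chain (R : realFieldType) (p : nat -> {poly R}) :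
  (forall N, exists C, 0 <= C /\ forall N', (N' <= N)%N -> forall j, exists D : {poly R},
     [/\ (size D <= N')%N, (forall e, `|D`_e| <= C) &
     (size ('X^N' * p j - p j.+1 * D)%R <= j.+1)%N]) ->
  forall d N, exists C, 0 <= C /\ forall N', (N' <= N)%N -> forall k, exists T : {poly R},
     [/\ (size T <= N')%N, (forall e, `|T`_e| <= C) &
     (size ('X^N' * p k - p (k + d.+1)%N * T)%R <= k + d.+1)%N].
Proof.
move=> hA; elim=> [|d IH] N.
  have [C [C0 hC]] := hA N; exists C; split => // N' hN' k.
  by rewrite addn1; apply: hC.
have [C1 [C10 hC1]] := hA N; have [C2 [C20 hC2]] := IH N.
exists (N%:R * (C1 * C2)); split; first by rewrite mulr_ge0 ?mulr_ge0.
move=> N' hN' k.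
have [D [sD cD eD]] := hC1 N' hN' k.
have : forall i, exists T : {poly R}, (i <= N)%N -> [/\ (size T <= i)%N, (forall e, `|T`_e| <= C2) &
     (size ('X^i * p k.+1 - p (k.+1 + d.+1)%N * T)%R <= k.+1 + d.+1)%N].
  move=> i; case: (leqP i N) => hi.
    by have [T hT] := hC2 i hi k.+1; exists T.
  by exists 0.
move=> /choice [Tf hTf].
have hiN (i : 'I_(size D)) : (i <= N)%N.
  by apply: leq_trans (ltnW (ltn_ord i)) (leq_trans sD hN').
exists (\sum_(i < size D) D`_i *: Tf i); split.
- apply: size_sum_le => i; apply: leq_trans (size_scale_leq _ _) _.
  have [h _ _] := hTf i (hiN i); apply: leq_trans h _.
  exact: leq_trans (ltnW (ltn_ord i)) sD.
- move=> e; rewrite coef_sum; apply: le_trans (ler_norm_sum _ _ _) _.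
  apply: (@le_trans _ _ (\sum_(i < size D) C1 * C2)).
    apply: ler_sum => i _; rewrite coefZ normrM.
    have [_ h _] := hTf i (hiN i).
    by apply: ler_pM => //; apply: normr_ge0.
  rewrite sumr_const card_ord -[C1 * C2 *+ _]mulr_natl; apply: ler_wpM2r; first by rewrite mulr_ge0.
  by rewrite ler_nat (leq_trans sD hN').
- have -> : 'X^N' * p k - p (k + d.+2)%N * \sum_(i < size D) D`_i *: Tf i =
     ('X^N' * p k - p k.+1 * D) +
     \sum_(i < size D) D`_i *: ('X^i * p k.+1 - p (k.+1 + d.+1)%N * Tf i).
    have ED : p k.+1 * D = \sum_(i < size D) D`_i *: ('X^i * p k.+1).
      rewrite [in LHS](_ : D = \sum_(i < size D) D`_i *: 'X^i); last by rewrite -poly_def coefK.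
      rewrite mulr_sumr; apply: eq_bigr => i _; by rewrite -scalerAr mulrC.
    rewrite -addSnnS ED mulr_sumr.
    rewrite [X in _ = _ + X](eq_bigr (fun i : 'I_(size D) => D`_i *: ('X^i * p k.+1) - D`_i *: (p (k.+1 + d.+1)%N * Tf i))); last by move=> i _; rewrite scalerBr.
    rewrite sumrB addrA addrNK; congr (_ - _).
    by apply: eq_bigr => i _; rewrite scalerAr.
  apply: leq_trans (size_polyD _ _) _; rewrite geq_max; apply/andP; split.
    by apply: leq_trans eD _; rewrite addnS ltnS leq_addr.
  apply: size_sum_le => i; apply: leq_trans (size_scale_leq _ _) _.
  have [_ _ h] := hTf i (hiN i); apply: leq_trans h _.
  by rewrite addSnnS.
Qed.


Definition hypA (R : realFieldType) (p : nat -> {poly R}) :=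
  forall N, exists C, 0 <= C /\ forall N', (N' <= N)%N -> forall j, exists D : {poly R},
     [/\ (size D <= N')%N, (forall e, `|D`_e| <= C) &
     (size ('X^N' * p j - p j.+1 * D)%R <= j.+1)%N].
Arguments hypA {R} p.

Lemma chain_unif (R : realFieldType) (p : nat -> {poly R}) : hypA p ->
  forall Dm N, exists C, 0 <= C /\ forall d, (d <= Dm)%N -> forall N', (N' <= N)%N -> forall k, exists T : {poly R},
     [/\ (size T <= N')%N, (forall e, `|T`_e| <= C) &
     (size ('X^N' * p k - p (k + d.+1)%N * T)%R <= k + d.+1)%N].
Proof.
move=> hA; elim=> [|Dm IH] N.
  have [C [C0 hC]] := @chain R p hA 0 N; exists C; split => // d.
  by rewrite leqn0 => /eqP ->.
have [C1 [C10 hC1]] := IH N; have [C2 [C20 hC2]] := @chain R p hA Dm.+1 N.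
exists (Num.max C1 C2); split; first by rewrite le_max C10.
move=> d; rewrite leq_eqVlt => /orP [/eqP -> | hd] N' hN' k.
  have [T [h1 h2 h3]] := hC2 N' hN' k; exists T; split => // e.
  by apply: le_trans (h2 e) _; rewrite le_max lexx orbT.
have [T [h1 h2 h3]] := hC1 d hd N' hN' k; exists T; split => // e.
by apply: le_trans (h2 e) _; rewrite le_max lexx.
Qed.


Lemma stepK (R : realFieldType) (p : nat -> {poly R}) (J : nat -> nat -> R) :
  (forall n, p n \is monic) -> (forall n, size (p n) = n.+1) -> hypA p ->
  (forall l, 'X * p l = \sum_(k < l.+2) J l k *: p k) ->
  forall m C0, 0 <= C0 -> (forall m', (m' < m)%N -> forall l, (m' <= l)%N -> `|J l (l - m')%N| <= C0) ->
  exists C, 0 <= C /\ forall l, (m <= l)%N -> `|J l (l - m)%N| <= C.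
Proof.
move=> hm hs hA hJ m C0 C00 hC0.
have [CA [CA0 hCA]] := hA m.+2.
have [CT [CT0 hCT]] := @chain_unif R p hA m m.+1.
exists (CA + C0 * CT * m%:R); split; first by rewrite addr_ge0 // !mulr_ge0.
move=> l hl.
have [A [sA cA eA]] := hCA m.+2 (leqnn _) l.
have : forall k, exists T : {poly R}, (l - m < k <= l)%N ->
   [/\ (size T <= m.+1)%N, (forall e, `|T`_e| <= CT) &
     (size ('X^(m.+1) * p k - p l.+1 * T)%R <= l.+1)%N].
  move=> k; case: (boolP (l - m < k <= l)%N) => hk; last by exists 0.
  have hd : (l - k <= m)%N by lia.
  have [T hT] := hCT (l - k)%N hd m.+1 (leqnn _) k.
  exists T => _; have e : (k + (l - k).+1 = l.+1)%N by lia.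
  by rewrite e in hT.
move=> /choice [Tf hTf].
pose Tk k := if k == l.+1 then 'X^(m.+1) else if k == (l - m)%N then 1
   else if (l - m < k <= l)%N then Tf k else 0.
have eT : forall k, (k < l.+2)%N -> (size ('X^(m.+1) * p k - p l.+1 * Tk k)%R <= l.+1)%N.
  move=> k hk; rewrite /Tk.
  case: eqP => [->|kl1]; first by rewrite mulrC subrr size_poly0.
  case: eqP => [->|klm].
    rewrite mulr1; apply: (@size_sub_monic _ _ _ l.+1).
    - by rewrite monicMl ?monicXn // hm.
    - exact: hm.
    - rewrite size_Mmonic ?hs ?size_polyXn //; first by lia.
      by rewrite -size_poly_eq0 size_polyXn.
    - exact: hs.
  case: ifP => hk2; first by have [_ _ ->] := hTf k hk2.
  rewrite mulr0 subr0; apply: leq_trans (size_polyMleq _ _) _.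
  rewrite size_polyXn hs; lia.
have EA : A = \sum_(k < l.+2) J l k *: Tk k.
  apply/eqP; rewrite -subr_eq0; apply/negPn/negP => nz.
  have : (size ((A - \sum_(k < l.+2) J l k *: Tk k) * p l.+1)%R <= l.+1)%N.
    have -> : (A - \sum_(k < l.+2) J l k *: Tk k) * p l.+1 =
       - ('X^(m.+2) * p l - p l.+1 * A) +
       \sum_(k < l.+2) J l k *: ('X^(m.+1) * p k - p l.+1 * Tk k).
      have -> : 'X^(m.+2) * p l = \sum_(k < l.+2) J l k *: ('X^(m.+1) * p k).
        rewrite exprSr -mulrA hJ mulr_sumr; apply: eq_bigr => k _.
        by rewrite scalerAr.
      rewrite mulrBl mulr_suml.
      under [X in _ = _ + X]eq_bigr => k _ do rewrite scalerBr.
      rewrite sumrB.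
      have -> : \sum_(k < l.+2) J l k *: Tk k * p l.+1 = \sum_(k < l.+2) J l k *: (p l.+1 * Tk k).
        by apply: eq_bigr => k _; rewrite -scalerAl; congr (_ *: _); exact: mulrC.
      rewrite [A * _]mulrC; ring.
    apply: leq_trans (size_polyD _ _) _; rewrite size_polyN geq_max eA /=.
    apply: size_sum_le => k; apply: leq_trans (size_scale_leq _ _) _.
    exact: eT.
  rewrite size_Mmonic ?hm // hs addnS /= => h.
  by move: nz h; rewrite -size_poly_eq0; case: (size _) => // n _; rewrite addSn ltnNge leq_addl.
have e0 := congr1 (fun q : {poly R} => q`_0) EA; rewrite /= coef_sum in e0.
have hlm : (l - m < l.+2)%N by lia.
rewrite (bigD1 (Ordinal hlm)) //= in e0.
have T0 : Tk (l - m)%N = 1.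
  rewrite /Tk; case: eqP => [h|_]; first by lia.
  by rewrite eqxx.
rewrite T0 coefZ coefC /= mulr1 in e0.
pose g (k : nat) := if (l - m < k <= l)%N then C0 * CT else 0.
have hf : forall k : 'I_l.+2, k != Ordinal hlm -> `|(J l k *: Tk k)`_0| <= g k.
  move=> k kn; rewrite coefZ /Tk /g.
  have kn' : (k : nat) != (l - m)%N.
    by apply: contraNneq kn => h; apply/eqP/val_inj.
  case: eqP => [->|kl1].
    by rewrite coefXn /= mulr0 normr0; case: ifP => _ //; rewrite mulr_ge0.
  rewrite (negbTE kn'); case: ifP => hk.
    have [_ h2 _] := hTf k hk.
    rewrite normrM; apply: ler_pM; rewrite ?normr_ge0 //.
    have -> : (k : nat) = (l - (l - k))%N by lia.
    apply: hC0; lia.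
  by rewrite coef0 mulr0 normr0 lexx.
have hsum : \sum_(k < l.+2 | k != Ordinal hlm) g k <= C0 * CT * m%:R.
  apply: (@le_trans _ _ (\sum_(k < l.+2) g k)).
    by rewrite [X in _ <= X](bigD1 (Ordinal hlm)) //= /g ltnn /= add0r lexx.
  have h1 : (0 <= (l - m).+1)%N by [].
  have h2 : ((l - m).+1 <= l.+1)%N by lia.
  rewrite -(@big_mkord _ _ _ l.+2 (fun _ => true) g) (big_cat_nat h1 (leq_trans h2 (leqnSn _))) /=.
  rewrite (big_cat_nat h2 (leqnSn _)) /= big_nat1.
  rewrite (@eq_big_nat _ _ _ 0 (l - m).+1 g (fun _ => 0)); last first.
    by move=> i /andP [_ hi]; rewrite /g ltnNge -ltnS hi.
  rewrite (@eq_big_nat _ _ _ (l - m).+1 l.+1 g (fun _ => C0 * CT)); last first.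
    by move=> i /andP [hi1 hi2]; rewrite /g hi1 -ltnS hi2.
  rewrite !sumr_const_nat mul0rn add0r /g ifF ?addr0; last by apply/negbTE; rewrite negb_and ltnn orbT.
  have -> : (l.+1 - (l - m).+1 = m)%N by lia.
  by rewrite mulr_natr.
have -> : J l (l - m)%N = A`_0 - \sum_(k < l.+2 | k != Ordinal hlm) (J l k *: Tk k)`_0.
  by rewrite e0 addrK.
apply: le_trans (ler_normB _ _) _; apply: lerD; first exact: cA.
apply: le_trans (ler_norm_sum _ _ _) _; apply: le_trans hsum.
by apply: ler_sum => k kn; exact: hf.
Qed.


Lemma Jband (R : realFieldType) (p : nat -> {poly R}) (J : nat -> nat -> R) :
  (forall n, p n \is monic) -> (forall n, size (p n) = n.+1) -> hypA p ->
  (forall l, 'X * p l = \sum_(k < l.+2) J l k *: p k) ->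
  forall m, exists C, 0 <= C /\ forall m', (m' <= m)%N -> forall l, (m' <= l)%N -> `|J l (l - m')%N| <= C.
Proof.
move=> hm hs hA hJ; elim=> [|m [C [C0 IH]]].
  have [C [C0 hC]] := @stepK R p J hm hs hA hJ 0 0 (lexx 0) (fun m' h => False_ind _ (notF h)).
  by exists C; split => // m'; rewrite leqn0 => /eqP ->.
have [C' [C0' hC']] := @stepK R p J hm hs hA hJ m.+1 C C0 (fun m' h => IH m' h).
exists (Num.max C C'); split; first by rewrite le_max C0.
move=> m'; rewrite leq_eqVlt => /orP [/eqP -> | hm'] l hl.
  by apply: le_trans (hC' l hl) _; rewrite le_max lexx orbT.
by apply: le_trans (IH m' hm' l hl) _; rewrite le_max lexx.
Qed.

Lemma Jsup (R : realFieldType) (p : nat -> {poly R}) (J : nat -> nat -> R) :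
  (forall n, p n \is monic) -> (forall n, size (p n) = n.+1) ->
  (forall l, 'X * p l = \sum_(k < l.+2) J l k *: p k) ->
  forall l, J l l.+1 = 1.
Proof.
move=> hm hs hJ l.
have := congr1 (fun q : {poly R} => q`_l.+1) (hJ l); rewrite /= coefXM /=.
have lc n : (p n)`_n = 1 by move: (hm n) => /monicP; rewrite /lead_coef hs.
rewrite lc coef_sum big_ord_recr /= big1 ?add0r.
  by rewrite coefZ lc mulr1.
move=> k _; rewrite coefZ nth_default ?mulr0 // hs; exact: ltn_ord.
Qed.

Theorem theorem3 (R : realType) (r : nat) (hr : (0 < r)%N)
    (mu : 'I_r -> {measure set R -> \bar R})
    (hmom : forall j, finite_moments (mu j))
    (hperf : perfect_system mu)
    (P : ('I_r -> nat) -> {poly R})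
    (hP : forall n, typeII_MOP mu n (P n))
    (nv : nat -> ('I_r -> nat)) (ii : nat -> 'I_r)
    (hnv_size : forall l, mi_size (nv l) = l)
    (hnv_step : forall l j, nv l.+1 j = (nv l j + (j == ii l))%N)
    (J : nat -> nat -> R)
    (hJ : forall l, 'X * P (nv l) = \sum_(k < l.+2) J l k *: P (nv k))
    (hJ0 : forall l k, (l.+1 < k)%N -> J l k = 0)
    (a b : R) (hab : a <= b)
    (hzeros : forall n : nat, exists s : seq R,
        [/\ zeros_list (P (nv n)) s, size s = n,
            forall x, x \in s -> a <= x <= b &
            forall x, root (P (nv n)) x -> ~~ root (P (nv n))^`() x])
    (hinter : forall (n : nat) (s t : seq R),
        zeros_list (P (nv n)) s -> zeros_list (P (nv n.+1)) t -> interlace s t) :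
  forall Rr : R, 0 <= Rr ->
    exists M : R, forall i j : nat, `|i%:R - j%:R| <= Rr -> `|J i j| <= M.
Proof.
move=> Rr Rr0.
pose p n := P (nv n).
have hm n : p n \is monic by have [h _ _] := hP (nv n).
have hs n : size (p n) = n.+1 by have [_ h _] := hP (nv n); rewrite h hnv_size.
pose B := 1 + `|a| + `|b|.
have B1 : 1 <= B by rewrite /B -addrA lerDl addr_ge0.
have hA : hypA p.
  move=> N; exists (N%:R * B ^+ N); split.
    by rewrite mulr_ge0 ?exprn_ge0 // (le_trans ler01 B1).
  move=> N' hN' j.
  have [s [zs hss hsab _]] := hzeros j.
  have [t [zt hst htab _]] := hzeros j.+1.
  have [hsz hint] := hinter j s t zs zt.
  move: zs zt => [_ [ss rs]] [_ [st rt]].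
  have hB : forall x, x \in t -> `|x| <= B.
    move=> x /htab /andP [h1 h2]; rewrite ler_norml /B.
    have := ler_norm b; have := ler_norm (- a); rewrite normrN => h3 h4.
    have := normr_ge0 a; have := normr_ge0 b => h5 h6.
    apply/andP; split; lra.
  have hint' : forall i, (i < j)%N -> t`_i < s`_i /\ s`_i < t`_i.+1.
    by move=> i hi; apply: hint; rewrite hss.
  have [D [h1 h2 h3]] := @lemmaA R (p j) (p j.+1) s t j B (hm j) (hs j) (hm j.+1) (hs j.+1)
     hss hst ss st (fun x xs => (rs x).2 xs) (fun x xt => (rt x).2 xt)
     hint' hB B1 N'.
  exists D; split => // e; apply: le_trans (h2 e) _.
  apply: ler_pM; rewrite ?ler_nat ?exprn_ge0 //; first exact: le_trans ler01 B1.
  exact: ler_weXn2l.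
have [C [C0 hC]] := @Jband R p J hm hs hA hJ (Num.Def.archi_bound Rr).
exists (Num.max 1 C) => i j hij.
case: (leqP j i) => hji.
  have hm' : (i - j <= Num.Def.archi_bound Rr)%N.
    have h1 : (i - j)%:R <= Rr :> R.
      by rewrite natrB //; apply: le_trans (ler_norm _) hij.
    have h2 := archi_boundP Rr0.
    by apply/ltnW; rewrite -(ltr_nat R); exact: le_lt_trans h1 h2.
  have := hC _ hm' i (leq_subr _ _); rewrite subKn // => h.
  by apply: le_trans h _; rewrite le_max lexx orbT.
case: (eqVneq j i.+1) => [->|ne].
  by rewrite (@Jsup R p J hm hs hJ i) normr1 le_max lexx.
have : (i.+1 < j)%N by rewrite ltn_neqAle eq_sym ne hji.
move=> /hJ0 ->; rewrite normr0 le_max ler01 //.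
Qed.
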